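(* Let $g \in \mathbb{I}_{\geq 1}$, $c \in \mathbb{I}_{\geq g}$, $b \in \mathbb{I}_{\geq c}$ be integers with $c/g \notin \mathbb{I}$, and let $q := \lceil c/g\rceil$. Let $\mathbb{X}_p \subseteq \mathbb{R}^{n_p}$, $\mathbb{U}_p\subseteq\mathbb{R}^{m_p}$ be closed sets containing the origin, let $f_p:\mathbb{R}^{n_p}\times\mathbb{R}^{m_p}\to\mathbb{R}^{n_p}$ with $f_p(0,0)=0$, let $\mathbb{X}_{f,p}\subseteq\mathbb{X}_p$ be closed and contain the origin, and let $k_p:\mathbb{X}_{f,p}\to\mathbb{U}_p$. Consider the system $x^+ = f(x,u)$ with state $x=(x_p,u_s,\beta)$, input $u=(u_c,\gamma)$, $\gamma\in\{0,1\}$, and $$f(x,u) = \big(f_p(x_p,\gamma u_c+(1-\gamma)u_s),\ \gamma u_c+(1-\gamma)u_s,\ \min\{\beta+g-\gamma c,\, b\}\big).$$ Define $\mathbb{X}_f' := \{0\}\times\{0\}\times\mathbb{I}_{[0,c-g-1]}$, $\mathbb{X}_f'' := \mathbb{X}_{f,p}\times\mathbb{U}_p\times\mathbb{I}_{[c-g,b]}$, $\mathbb{X}_f := \mathbb{X}_f'\cup\mathbb{X}_f''$, the terminal control sequence $\kappa_0(x) := (0,0)$ if $x\in\mathbb{X}_f'$, $\kappa_0(x):=(k_p(x_p),1)$ if $x\in\mathbb{X}_f''$, and $\kappa_j(x):=(0,0)$ for $j\in\mathbb{I}_{[1,q-1]}$; define $f_0(x):=x$ and $f_i(x) := f\big(f_{i-1}(x),\kappa_{(i-1)\bmod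 q}(f_{i-1}(x))\big)$, and let $f_{\beta,i}(x)$ denote the last (bucket) component of $f_i(x)$. For $\sigma>0$ let $V_{f,\beta}(\beta):=\sigma(b^2-\beta^2)$. Then there exists $\alpha:\mathbb{I}_{[0,b]}\to\mathbb{R}$ with $\alpha(b)=0$ and $\alpha(\beta)>0$ for all $\beta\in\mathbb{I}_{[0,b-1]}$ such that for all $x=(x_p,u_s,\beta)\in\mathbb{X}_f$, $$V_{f,\beta}(f_{\beta,q}(x)) - V_{f,\beta}(\beta) \leq -\alpha(\beta).$$
   Context: $\mathbb{I}$ denotes the integers, $\mathbb{I}_{[a,b]} := \mathbb{I}\cap[a,b]$, $\mathbb{I}_{\geq a}:=\mathbb{I}\cap[a,\infty)$. The component $\beta$ models the token level of a token bucket with bucket size $b$, token generation rate $g$ per step and transmission cost $c$; $\gamma=1$ indicates a transmission. *)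

(* Defs.v *)
From HB Require Import structures.
From mathcomp Require Import all_boot all_order all_algebra.
From mathcomp Require Import all_classical all_reals all_analysis.
Set Implicit Arguments. Unset Strict Implicit. Unset Printing Implicit Defensive.
Import Order.TTheory GRing.Theory Num.Theory.
Import numFieldNormedType.Exports.
Local Open Scope ring_scope.

Section TokenBucket.
Variables (R : realType) (np mp : nat).
Variables (g c b : int).
Variable fp : 'rV[R]_np -> 'rV[R]_mp -> 'rV[R]_np.
Variable kp : 'rV[R]_np -> 'rV[R]_mp.

(* state x = (x_p, u_s, beta), input u = (u_c, gamma) with gamma : bool
   (gamma = true encodes gamma = 1, false encodes 0). *)
Definition tb_state := ('rV[R]_np * 'rV[R]_mp * int)%type.
Definition tb_input := ('rV[R]_mp * bool)%type.

Definition tb_q : nat := `|Num.ceil (c%:~R / g%:~R : R)|%N.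

Definition tb_f (x : tb_state) (u : tb_input) : tb_state :=
  let: (xp, us, beta) := x in
  let: (uc, gam) := u in
  let uapp := (gam%:R : R) *: uc + (1 - (gam%:R : R)) *: us in
  (fp xp uapp, uapp, Order.min (beta + g - (gam%:Z) * c) b).

Definition in_Xf' (x : tb_state) : bool :=
  [&& x.1.1 == 0, x.1.2 == 0 & (0 <= x.2 <= c - g - 1)].

Definition in_Xf'' (Xfp : set 'rV[R]_np) (Up : set 'rV[R]_mp)
  (x : tb_state) : Prop :=
  Xfp x.1.1 /\ Up x.1.2 /\ (c - g <= x.2 <= b).

Definition in_Xf Xfp Up (x : tb_state) : Prop := in_Xf' x \/ in_Xf'' Xfp Up x.

(* terminal control sequence kappa_j; kappa_0 is only meaningful on X_f
   (X_f' and X_f'' are disjoint), its value outside X_f is irrelevant. *)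
Definition tb_kappa (j : nat) (x : tb_state) : tb_input :=
  if j == 0%N then
    (if in_Xf' x then (0, false) else (kp x.1.1, true))
  else (0, false).

Fixpoint tb_fi (i : nat) (x : tb_state) : tb_state :=
  match i with
  | 0%N => x
  | i'.+1 => let y := tb_fi i' x in tb_f y (tb_kappa (i' %% tb_q) y)
  end.

Definition tb_fbeta (i : nat) (x : tb_state) : int := (tb_fi i x).2.

Definition V_fbeta (sigma : R) (beta : int) : R :=
  sigma * ((b%:~R) ^+ 2 - (beta%:~R) ^+ 2).

End TokenBucket.

(* Main.v *)
Require Import Defs.
From HB Require Import structures.
From mathcomp Require Import all_boot all_order all_algebra.
From mathcomp Require Import all_classical all_reals all_analysis.
From mathcomp Require Import zify ring lra.
Import Order.TTheory GRing.Theory Num.Theory.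
Import numFieldNormedType.Exports.
Local Open Scope classical_set_scope.
Local Open Scope ring_scope.

Lemma q_facts (R : realType) (g c : int) (hg : 1 <= g) (hc : g <= c)
  (hndiv : ~~ (g %| c)%Z) :
  (0 < tb_q R g c)%N /\ c < (tb_q R g c)%:Z * g.
Proof.
rewrite /tb_q; set k := Num.ceil _.
have g0 : (0 : R) < g%:~R by rewrite ltr0z; lia.
have hk : (c%:~R / g%:~R : R) <= k%:~R by apply: ceil_ge.
have hk' : c <= k * g.
  rewrite -(ler_int R) rmorphM /= -ler_pdivrMr //.
have k0 : 0 < k by nia.
have ka : (`|k|%N)%:Z = k by rewrite abszE gtr0_norm.
rewrite ka; split; first lia.
rewrite lt_neqAle hk' andbT; apply/negP => /eqP E.
move: hndiv; rewrite E; by rewrite dvdz_mull.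
Qed.

Lemma tb_f2 (R : realType) np mp g c b fp (y : tb_state R np mp) u gam :
  (tb_f g c b fp y (u, gam)).2 = Order.min (y.2 + g - gam%:Z * c) b.
Proof. by case: y => [[? ?] ?]. Qed.

Lemma iter_beta (R : realType) np mp g c b fp kp (x : tb_state R np mp) n :
  (n < tb_q R g c)%N -> 0 <= g ->
  (tb_fi g c b fp kp n.+1 x).2 =
  Order.min ((tb_fi g c b fp kp 1 x).2 + n%:Z * g) b.
Proof.
move=> + g0; elim: n => [|n IH] hn.
  rewrite mul0r addr0 /=.
  case: tb_kappa => ? ?; rewrite tb_f2; lia.
have hn' : (n < tb_q R g c)%N by lia.
have E : tb_fi g c b fp kp n.+2 x = tb_f g c b fp (tb_fi g c b fp kp n.+1 x)
  (tb_kappa g c kp (n.+1 %% tb_q R g c) (tb_fi g c b fp kp n.+1 x)) by [].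
have K : forall y, tb_kappa g c kp n.+1 y = (0, false) by [].
rewrite E modn_small // K.
rewrite tb_f2 IH //.
lia.
Qed.

Theorem lemma2 (R : realType) (np mp : nat) (g c b : int)
  (hg : 1 <= g) (hc : g <= c) (hb : c <= b) (hndiv : ~~ (g %| c)%Z)
  (Xp : set 'rV[R]_np) (Up : set 'rV[R]_mp)
  (hXp : closed Xp) (hXp0 : Xp 0) (hUp : closed Up) (hUp0 : Up 0)
  (fp : 'rV[R]_np -> 'rV[R]_mp -> 'rV[R]_np) (hfp0 : fp 0 0 = 0)
  (Xfp : set 'rV[R]_np) (hXfpX : Xfp `<=` Xp) (hXfp : closed Xfp) (hXfp0 : Xfp 0)
  (kp : 'rV[R]_np -> 'rV[R]_mp) (hkp : forall xp, Xfp xp -> Up (kp xp))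
  (sigma : R) (hsigma : 0 < sigma) :
  exists alpha : int -> R,
    alpha b = 0 /\
    (forall beta : int, 0 <= beta <= b - 1 -> 0 < alpha beta) /\
    (forall x : tb_state R np mp, in_Xf g c b Xfp Up x ->
       V_fbeta b sigma (tb_fbeta g c b fp kp (tb_q R g c) x)
         - V_fbeta b sigma x.2 <= - alpha x.2).
Proof.
exists (fun beta => sigma * ((Order.min (beta + 1) b)%:~R ^+ 2 - beta%:~R ^+ 2)).
split.
  have -> : Order.min (b + 1) b = b by lia.
  by rewrite subrr mulr0.
split.
  move=> beta hbeta.
  have -> : Order.min (beta + 1) b = beta + 1 by lia.
  apply: mulr_gt0 => //.
  rewrite subr_gt0 -!rmorphXn /= ltr_int; nia.
move=> x hx.
have [q0 hq] := q_facts R g c hg hc hndiv.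
set q := tb_q R g c in q0 hq *.
set beta := x.2.
have hb1 : (tb_fi g c b fp kp 1 x).2 =
   Order.min (beta + g - (~~ in_Xf' g c x)%:Z * c) b.
  have E : tb_fi g c b fp kp 1 x = tb_f g c b fp x (tb_kappa g c kp (0 %% q) x) by [].
  have K0 : tb_kappa g c kp 0 x = if in_Xf' g c x then (0, false) else (kp x.1.1, true) by [].
  rewrite E mod0n K0; case: (in_Xf' g c x); by rewrite tb_f2.
have key : 0 <= Order.min (beta + 1) b <= tb_fbeta g c b fp kp q x.
  rewrite /tb_fbeta -(prednK q0) iter_beta ?prednK //; last lia.
  rewrite hb1.
  have hq' : c < (q.-1)%:Z * g + g.
    move: hq; rewrite -{1}(prednK q0) -addn1 PoszD mulrDl mul1r //.
  have qg : 0 <= (q.-1)%:Z * g by nia.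
  case: hx => [hx|hx].
    rewrite hx /=. move: hx => /and3P [_ _ hx]. rewrite -/beta in hx. lia.
  have -> : in_Xf' g c x = false.
    apply/negP => /and3P [_ _ h]. case: hx => _ [_ h2]. rewrite -/beta in h h2. lia.
  case: hx => _ [_ h2]. rewrite -/beta in h2 *. simpl. lia.
set m := Order.min (beta + 1) b in key *.
set F := tb_fbeta _ _ _ _ _ _ _ in key *.
rewrite /V_fbeta -/beta.
have : m%:~R ^+ 2 <= F%:~R ^+ 2 :> R.
  rewrite -!rmorphXn /= ler_int; nia.
move=> h.
move: h; rewrite -subr_ge0 => h.
have := mulr_ge0 (ltW hsigma) h.
move: (F%:~R : R) (m%:~R : R) (beta%:~R : R) (b%:~R : R) => a1 a2 a3 a4 H.
rewrite -subr_ge0.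
have -> : - (sigma * (a2 ^+ 2 - a3 ^+ 2)) -
  (sigma * (a4 ^+ 2 - a1 ^+ 2) - sigma * (a4 ^+ 2 - a3 ^+ 2)) =
  sigma * (a1 ^+ 2 - a2 ^+ 2) by ring.
exact: H.
Qed.
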